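(* Let $(X_i)_{i\in I}$ be a family of zero-dimensional coherent domains and $F\subseteq\prod_{i\in I}\mathcal V_{=1}(X_i)\subseteq\prod_{i\in I}\mathcal V(X_i)$ a finite set. Then $b(F)=\mathrm{conv}\,F$, where $b(F)=\overline{\mathrm{conv}\,F}\cap{\uparrow}\mathrm{conv}\,F$ computed in $\prod_{i\in I}\mathcal V(X_i)$; consequently $\mathrm{conv}\,F$ is Lawson-compact.
   Context: A domain is a continuous dcpo; it is coherent if the intersection of any two compact saturated subsets is compact; zero-dimensional means its (Scott) topology has a basis of clopens. $\mathcal V(X)$ is the set of continuous valuations on $X$ (strict, monotone, modular maps from Scott-opens to $[0,\infty]$ preserving directed unions), ordered pointwise and carrying pointwise addition and scaling; $\mathcal V_{=1}(X)$ those with $\mu(X)=1$. The product $\prod_i\mathcal V(X_i)$ has the componentwise order and operations. $\mathrm{conv}\,F$ is the set of finite convex combinations of elements of $F$, $\overline{A}$ the Scott closure, ${\uparrow}A$ the up-closure. The Lawson topology is generated by the Scott-open sets and the complements of principal up-sets ${\uparrow}x$. *)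

(* Defs.v *)
From HB Require Import structures.
From mathcomp Require Import all_boot all_order all_algebra.
From mathcomp Require Import boolp classical_sets functions cardinality reals constructive_ereal ereal.
Set Implicit Arguments. Unset Strict Implicit. Unset Printing Implicit Defensive.
Import Order.TTheory GRing.Theory Num.Theory.
Local Open Scope classical_set_scope.
Local Open Scope ring_scope.

Definition is_poset {T : Type} (le : T -> T -> Prop) : Prop :=
  (forall x, le x x) /\ (forall x y z, le x y -> le y z -> le x z) /\
  (forall x y, le x y -> le y x -> x = y).

Definition upper_set {T : Type} (le : T -> T -> Prop) (A : set T) : Prop :=
  forall x y, A x -> le x y -> A y.

Definition directed {T : Type} (le : T -> T -> Prop) (D : set T) : Prop :=
  (exists x, D x) /\
  (forall x y, D x -> D y -> exists z, D z /\ le x z /\ le y z).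

Definition is_lub {T : Type} (le : T -> T -> Prop) (D : set T) (s : T) : Prop :=
  (forall d, D d -> le d s) /\ (forall u, (forall d, D d -> le d u) -> le s u).

Definition dcpo {T : Type} (le : T -> T -> Prop) : Prop :=
  is_poset le /\ (forall D, directed le D -> exists s, is_lub le D s).

Definition way_below {T : Type} (le : T -> T -> Prop) (x y : T) : Prop :=
  forall D s, directed le D -> is_lub le D s -> le y s -> exists d, D d /\ le x d.

Definition cont_domain {T : Type} (le : T -> T -> Prop) : Prop :=
  dcpo le /\
  (forall y, directed le (fun x => way_below le x y) /\
             is_lub le (fun x => way_below le x y) y).

Definition scott_open {T : Type} (le : T -> T -> Prop) (U : set T) : Prop :=
  upper_set le U /\
  (forall D s, directed le D -> is_lub le D s -> U s -> exists d, D d /\ U d).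

Definition compact_wrt {T : Type} (op : set T -> Prop) (K : set T) : Prop :=
  forall G : set (set T), (forall U, G U -> op U) ->
    K `<=` \bigcup_(U in G) U ->
    exists (n : nat) (f : nat -> set T),
      (forall k, (k < n)%N -> G (f k)) /\
      K `<=` (fun x => exists k, (k < n)%N /\ f k x).

Definition saturated {T : Type} (le : T -> T -> Prop) (K : set T) : Prop :=
  forall x, K x <-> (forall U, scott_open le U -> K `<=` U -> U x).

Definition scott_coherent {T : Type} (le : T -> T -> Prop) : Prop :=
  forall K1 K2, saturated le K1 -> compact_wrt (scott_open le) K1 ->
    saturated le K2 -> compact_wrt (scott_open le) K2 ->
    compact_wrt (scott_open le) (K1 `&` K2).

Definition scott_zero_dimensional {T : Type} (le : T -> T -> Prop) : Prop :=
  forall U x, scott_open le U -> U x ->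
    exists C, scott_open le C /\ scott_open le (~` C) /\ C x /\ C `<=` U.

Definition opens {T : Type} (le : T -> T -> Prop) := {U : set T | scott_open le U}.

Definition valuation (R : realType) {T : Type} (le : T -> T -> Prop)
    (mu : opens le -> \bar R) : Prop :=
  (forall U, (0 <= mu U)%E) /\
  (forall U, sval U = set0 -> mu U = 0%E) /\
  (forall U V, sval U `<=` sval V -> (mu U <= mu V)%E) /\
  (forall U V W Z, sval W = sval U `|` sval V -> sval Z = sval U `&` sval V ->
      (mu U + mu V = mu W + mu Z)%E) /\
  (forall (D : set (opens le)) (W : opens le),
      directed (fun U V => sval U `<=` sval V) D ->
      sval W = \bigcup_(U in D) sval U ->
      mu W = ereal_sup (mu @` D)).

Definition prodV (R : realType) {I : Type} {X : I -> Type}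
    (le : forall i, X i -> X i -> Prop) :=
  {nu : forall i, opens (le i) -> \bar R | forall i, @valuation R (X i) (le i) (nu i)}.

Definition prod_le (R : realType) {I : Type} {X : I -> Type}
    {le : forall i, X i -> X i -> Prop} (a b : prodV R le) : Prop :=
  forall i U, (sval a i U <= sval b i U)%E.

Definition prob_prodV (R : realType) {I : Type} {X : I -> Type}
    {le : forall i, X i -> X i -> Prop} (nu : prodV R le) : Prop :=
  forall i (U : opens (le i)), sval U = setT -> sval nu i U = 1%E.

Definition conv (R : realType) {I : Type} {X : I -> Type}
    {le : forall i, X i -> X i -> Prop} (F : set (prodV R le)) : set (prodV R le) :=
  fun nu => exists (n : nat) (lam : 'I_n -> R) (f : 'I_n -> prodV R le),
    (forall k, F (f k)) /\ (forall k, 0 <= lam k) /\ \sum_(k < n) lam k = 1 /\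
    (forall i U, sval nu i U = (\sum_(k < n) (lam k)%:E * sval (f k) i U)%E).

Definition scott_closure {T : Type} (le : T -> T -> Prop) (A : set T) : set T :=
  fun x => forall U, scott_open le U -> U x -> exists a, A a /\ U a.

Definition up_closure {T : Type} (le : T -> T -> Prop) (A : set T) : set T :=
  fun x => exists a, A a /\ le a x.

Definition bF (R : realType) {I : Type} {X : I -> Type}
    {le : forall i, X i -> X i -> Prop} (F : set (prodV R le)) : set (prodV R le) :=
  scott_closure (@prod_le R I X le) (conv F) `&` up_closure (@prod_le R I X le) (conv F).

Definition lawson_subbasic {T : Type} (le : T -> T -> Prop) (S : set T) : Prop :=
  scott_open le S \/ exists y, S = ~` (fun z => le y z).

Definition lawson_open {T : Type} (le : T -> T -> Prop) (U : set T) : Prop :=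
  forall x, U x -> exists (n : nat) (f : nat -> set T),
    (forall k, (k < n)%N -> lawson_subbasic le (f k)) /\
    (forall k, (k < n)%N -> f k x) /\
    (fun z => forall k, (k < n)%N -> f k z) `<=` U.

Definition lawson_compact {T : Type} (le : T -> T -> Prop) (K : set T) : Prop :=
  compact_wrt (lawson_open le) K.

(* Main.v *)
Require Import Defs.
From HB Require Import structures.
From mathcomp Require Import all_boot all_order all_algebra finmap.
From mathcomp Require Import boolp classical_sets functions cardinality reals constructive_ereal ereal topology normedtype.
From mathcomp Require Import lra.

Module PartM.
Set Implicit Arguments. Unset Strict Implicit. Unset Printing Implicit Defensive.
Import Order.TTheory GRing.Theory Num.Theory.
Import numFieldTopology.Exports numFieldNormedType.Exports.
Local Open Scope classical_set_scope.
Local Open Scope ring_scope.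
Local Open Scope ereal_scope.

Section Scott.
Variables (T : Type) (le : T -> T -> Prop).

Lemma scott_open_setT : scott_open le setT.
Proof. split => // D s [[d Dd] _] _ _; by exists d. Qed.

Lemma scott_open_set0 : scott_open le set0.
Proof. by split. Qed.

Lemma scott_openU A B : scott_open le A -> scott_open le B -> scott_open le (A `|` B).
Proof.
move=> [uA dA] [uB dB]; split.
  by move=> x y [Ax|Bx] xy; [left; apply: uA Ax xy|right; apply: uB Bx xy].
move=> D s Dd ls [As|Bs].
  by have [d [Dd' Ad]] := dA D s Dd ls As; exists d; split => //; left.
by have [d [Dd' Bd]] := dB D s Dd ls Bs; exists d; split => //; right.
Qed.

Lemma scott_openI A B : scott_open le A -> scott_open le B -> scott_open le (A `&` B).
Proof.
move=> [uA dA] [uB dB]; split.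
  by move=> x y [Ax Bx] xy; split; [apply: uA Ax xy|apply: uB Bx xy].
move=> D s Dd ls [As Bs].
have [d1 [D1 A1]] := dA D s Dd ls As.
have [d2 [D2 B2]] := dB D s Dd ls Bs.
have [z [Dz [l1 l2]]] := Dd.2 _ _ D1 D2.
by exists z; split => //; split; [apply: uA A1 l1|apply: uB B2 l2].
Qed.

End Scott.
Lemma ereal_sandwich (R : realType) (p q p' q' : \bar R) :
  0 <= p -> 0 <= q -> p <= p' -> q <= q' -> p' + q' = 1 -> p + q = 1 -> p = p'.
Proof.
case: p => [p| |]; case: q => [q| |]; case: p' => [p'| |]; case: q' => [q'| |] //=;
  rewrite ?lee_fin ?leey ?leNye ?leye_eq ?leeNy_eq //.
all: try (move=> *; discriminate).
move=> ? ? ? ? [] ? [] ?; congr EFin; lra.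
Qed.
Section SupLemmas.
Variable R : realType.

Lemma le_sup_add_aux (A : set (\bar R)) (c S : \bar R) :
  0 <= c -> (exists a, A a /\ 0 <= a) -> (forall a, A a -> a + c <= S) ->
  ereal_sup A + c <= S.
Proof.
move=> c0 [a0 [Aa0 a00]] H.
case: c c0 H => [r| |] c0 H.
- rewrite -leeBrDr //; apply: ge_ereal_sup => a Aa; rewrite leeBrDr //; exact: H.
- have := H a0 Aa0; rewrite addey; last by rewrite gt_eqF // (lt_le_trans _ a00) ?ltNy0.
  move=> /[dup] yS; rewrite leye_eq => /eqP ->; by rewrite leey.
- by rewrite leeNy_eq in c0.
Qed.

Lemma sup_add_dir (T : Type) (D : set T) (ord : T -> T -> Prop) (f g : T -> \bar R) :
  (exists d, D d) ->
  (forall x y, D x -> D y -> exists z, D z /\ ord x z /\ ord y z) ->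
  (forall x y, ord x y -> f x <= f y) -> (forall x y, ord x y -> g x <= g y) ->
  (forall x, D x -> 0 <= f x) -> (forall x, D x -> 0 <= g x) ->
  ereal_sup [set f d + g d | d in D] = ereal_sup (f @` D) + ereal_sup (g @` D).
Proof.
move=> [d0 Dd0] dir fm gm f0 g0; apply/le_anti/andP; split.
  apply: ge_ereal_sup => _ [d Dd <-]; apply: leeD; apply: ereal_sup_ubound; by exists d.
rewrite addeC; apply: le_sup_add_aux.
  by apply: (le_trans (f0 d0 Dd0)); apply: ereal_sup_ubound; exists d0.
  by exists (g d0); split; [exists d0|exact: (g0 d0 Dd0)].
move=> _ [d2 Dd2 <-]; rewrite addeC; apply: le_sup_add_aux.
  exact: (g0 d2 Dd2).
  by exists (f d0); split; [exists d0|exact: (f0 d0 Dd0)].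
move=> _ [d1 Dd1 <-].
have [z [Dz [o1 o2]]] := dir _ _ Dd1 Dd2.
apply: (le_trans (leeD (fm _ _ o1) (gm _ _ o2))).
by apply: ereal_sup_ubound; exists z.
Qed.


Lemma sup_swap_le (J K : Type) (A : set J) (B : set K) (k : J -> K -> \bar R) :
  ereal_sup [set ereal_sup [set k d V | V in B] | d in A] <=
  ereal_sup [set ereal_sup [set k d V | d in A] | V in B].
Proof.
apply: ge_ereal_sup => _ [d Ad <-]; apply: ge_ereal_sup => _ [V BV <-].
apply: (@le_trans _ _ (ereal_sup [set k d' V | d' in A])).
  by apply: ereal_sup_ubound; exists d.
by apply: ereal_sup_ubound; exists V.
Qed.

Lemma sup_val (T J : Type) (le : T -> T -> Prop) (D : set J) (ord : J -> J -> Prop)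
    (h : J -> opens le -> \bar R) :
  (exists d, D d) ->
  (forall x y, D x -> D y -> exists z, D z /\ ord x z /\ ord y z) ->
  (forall x y, ord x y -> forall U, h x U <= h y U) ->
  (forall d, D d -> valuation (h d)) ->
  valuation (fun U => ereal_sup [set h d U | d in D]).
Proof.
move=> [d0 Dd0] dir hm hv.
have h0 : forall d U, D d -> 0 <= h d U by move=> d U /hv [].
have s0 : forall U, 0 <= ereal_sup [set h d U | d in D].
  by move=> U; apply: (le_trans (h0 d0 U Dd0)); apply: ereal_sup_ubound; exists d0.
split; first exact: s0.
split.
  move=> U U0; apply/le_anti/andP; split; last exact: s0.
  apply: ge_ereal_sup => _ [d Dd <-].
  by have [_ [/(_ U U0) -> _]] := hv d Dd.
split.
  move=> U V UV; apply: ge_ereal_sup => _ [d Dd <-].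
  apply: (@le_trans _ _ (h d V)); first by have [_ [_ [+ _]]] := hv d Dd; apply.
  by apply: ereal_sup_ubound; exists d.
split.
  move=> U V W Z eW eZ.
  have key : forall A B : opens le,
      ereal_sup [set h d A + h d B | d in D] =
      ereal_sup [set h d A | d in D] + ereal_sup [set h d B | d in D].
    move=> A B.
    apply: (sup_add_dir (ord := ord)) => //; first by exists d0.
    - by move=> x y /hm; apply.
    - by move=> x y /hm; apply.
    - by move=> x Dx; apply: h0.
    - by move=> x Dx; apply: h0.
  rewrite -!key; congr ereal_sup; apply: eq_imagel => d Dd.
  by have [_ [_ [_ [+ _]]]] := hv d Dd; apply.
move=> DD W dirDD eW.
have -> : [set ereal_sup [set h d U | d in D] | U in DD] =
          [set ereal_sup [set h d U | d in D] | U in DD] by [].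
have eq1 : forall d, D d -> h d W = ereal_sup [set h d U | U in DD].
  by move=> d Dd; have [_ [_ [_ [_ +]]]] := hv d Dd; apply.
rewrite (eq_imagel eq1).
apply/le_anti/andP; split; first exact: sup_swap_le.
exact: (sup_swap_le DD D (fun U d => h d U)).
Qed.


Lemma sup_sum_dir (J : Type) (D : set J) (ord : J -> J -> Prop) (m : nat)
    (f : 'I_m -> J -> \bar R) :
  (exists d, D d) ->
  (forall x y, D x -> D y -> exists z, D z /\ ord x z /\ ord y z) ->
  (forall k x y, ord x y -> f k x <= f k y) ->
  (forall k x, D x -> 0 <= f k x) ->
  ereal_sup [set \sum_(k < m) f k d | d in D] =
  \sum_(k < m) ereal_sup [set f k d | d in D].
Proof.
move=> [d0 Dd0] dir fm f0; elim: m f fm f0 => [|m IH] f fm f0.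
  rewrite big_ord0; under eq_imagel do rewrite big_ord0.
  by rewrite ereal_sup_cst //; apply/set0P; exists d0.
rewrite big_ord_recr /=; under eq_imagel do rewrite big_ord_recr /=.
rewrite -(IH (fun k => f (widen_ord (leqnSn m) k))) //.
- apply: (sup_add_dir (ord := ord)) => //.
  + by exists d0.
  + by move=> x y oxy; apply: lee_sum => k _; apply: fm.
  + by move=> x y; apply: fm.
  + by move=> x Dx; apply: sume_ge0 => k _; apply: f0.
  + by move=> x Dx; apply: f0.
- by move=> k x y; apply: fm.
- by move=> k x; apply: f0.
Qed.

Lemma comb_val (T : Type) (le : T -> T -> Prop) (m : nat) (w : 'I_m -> R)
    (g : 'I_m -> opens le -> \bar R) :
  (forall k, (0 <= w k)%R) -> (forall k, valuation (g k)) ->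
  valuation (fun U => \sum_(k < m) (w k)%:E * g k U).
Proof.
move=> w0 gv.
have g0 : forall k U, 0 <= g k U by move=> k U; have [+ _] := gv k; apply.
have gm : forall k U V, sval U `<=` sval V -> g k U <= g k V.
  by move=> k U V UV; have [_ [_ [+ _]]] := gv k; apply.
split.
  by move=> U; apply: sume_ge0 => k _; apply: mule_ge0; rewrite ?lee_fin.
split.
  move=> U U0; apply: big1 => k _.
  by have [_ [/(_ U U0) -> _]] := gv k; rewrite mule0.
split.
  move=> U V UV; apply: lee_sum => k _; apply: lee_wpmul2l; rewrite ?lee_fin //.
  exact: gm.
split.
  move=> U V W Z eW eZ; rewrite -!big_split /=; apply: eq_bigr => k _.
  rewrite -!ge0_muleDr ?g0 //.
  by have [_ [_ [_ [+ _]]]] := gv k; move=> /(_ U V W Z eW eZ) ->.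
move=> DD W [DDne dirDD] eW.
have -> : \sum_(k < m) (w k)%:E * g k W =
          \sum_(k < m) ereal_sup [set (w k)%:E * g k U | U in DD].
  apply: eq_bigr => k _.
  have [_ [_ [_ [_ +]]]] := gv k; move=> /(_ DD W (conj DDne dirDD) eW) ->.
  rewrite -ereal_supZl //; first by rewrite image_comp.
  by case: DDne => U DU; apply/set0P; exists (g k U); exists U.
rewrite (sup_sum_dir (ord := fun U V => sval U `<=` sval V)) //.
- move=> k U V UV; apply: lee_wpmul2l; rewrite ?lee_fin //; exact: gm.
- by move=> k U _; apply: mule_ge0; rewrite ?lee_fin.
Qed.

End SupLemmas.

End PartM.
Import PartM.

Module PartQ.
Set Implicit Arguments. Unset Strict Implicit. Unset Printing Implicit Defensive.
Import Order.TTheory GRing.Theory Num.Theory.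
Import numFieldTopology.Exports numFieldNormedType.Exports.
Local Open Scope classical_set_scope.
Local Open Scope ring_scope.

Section Simplex.
Variables (R : realType) (m : nat).
Definition simplex : set 'rV[R]_m :=
  [set v | (forall k, 0 <= v ord0 k) /\ \sum_(k < m) v ord0 k = 1].

Lemma coord_le_norm (M : 'rV[R]_m) k : `|M ord0 k| <= `|M|.
Proof.
have /mapP[j Hj ->] : `|M ord0 k| \in [seq `|M x.1 x.2| | x : 'I_1 * 'I_m].
  by apply/mapP; exists (ord0, k) => //=; rewrite mem_enum.
by rewrite [leRHS]/Num.norm /= mx_normrE; apply/bigmax_geP; right => /=; exists j.
Qed.

Lemma ball_coord (v w : 'rV[R]_m) (e : R) k : ball v e w -> `|v ord0 k - w ord0 k| < e.
Proof.
rewrite -ball_normE /ball_ /= => H; apply: le_lt_trans H.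
by have := coord_le_norm (v - w) k; rewrite !mxE.
Qed.

Lemma simplex_closed : closed simplex.
Proof.
rewrite -[simplex]setCK; apply: open_closedC.
rewrite openE => v nv; apply/nbhs_ballP.
have [[k vk]|] := pselect (exists k, v ord0 k < 0).
  exists (- v ord0 k); first by rewrite /= oppr_gt0.
  move=> w /(ball_coord k) vw [w0 _]; have := w0 k.
  move: vw; rewrite ltr_norml; lra.
move=> /forallNP H.
have v0 : forall k, 0 <= v ord0 k by move=> k; rewrite leNgt; apply/negP => /(H k).
have s1 : \sum_(k < m) v ord0 k != 1.
  by apply/negP => /eqP e; apply: nv; split.
set d := `|\sum_(k < m) v ord0 k - 1|.
have d0 : 0 < d by rewrite normr_gt0 subr_eq0.
exists (d / (m%:R + 1)); first by rewrite /= divr_gt0 // ltr_wpDl.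
move=> w /= vw [_ sw].
have : `|\sum_(k < m) v ord0 k - \sum_(k < m) w ord0 k| <= m%:R * (d / (m%:R + 1)).
  rewrite -sumrB; apply: (le_trans (ler_norm_sum _ _ _)).
  apply: (@le_trans _ _ (\sum_(k < m) (d / (m%:R + 1)))).
    by apply: ler_sum => k _; apply: ltW; apply: ball_coord.
  by rewrite sumr_const card_ord mulr_natl.
rewrite sw -/d.
have : m%:R * (d / (m%:R + 1)) < d.
  rewrite mulrA ltr_pdivrMr ?ltr_wpDl // mulrC ltr_pM2l //; lra.
lra.
Qed.

Lemma simplex_compact : compact simplex.
Proof.
have Mnco : compact [set v : 'rV[R]_m | forall i, v ord0 i \in `[(0:R), 1]].
  apply: (@rV_compact _ _ (fun=> `[(0:R), 1]%classic)) => _.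
  exact: segment_compact.
apply: (subclosed_compact simplex_closed Mnco) => v [v0 s1] k /=.
rewrite in_itv /= v0 /= -s1.
rewrite (bigD1 k) //= lerDl; apply: sumr_ge0 => j _; exact: v0.
Qed.

End Simplex.

End PartQ.
Import PartQ.

Module PartP.
Set Implicit Arguments. Unset Strict Implicit. Unset Printing Implicit Defensive.
Import Order.TTheory GRing.Theory Num.Theory.
Import numFieldTopology.Exports numFieldNormedType.Exports.
Local Open Scope classical_set_scope.
Local Open Scope ring_scope.
Local Open Scope ereal_scope.

Unset Implicit Arguments.
Section Prod.
Variables (R : realType) (I : Type) (X : I -> Type) (le : forall i, X i -> X i -> Prop).
Notation P := (prodV R le).
Notation ple := (@prod_le R I X le).

Definition supP (D : set P) (D0 : exists d, D d) (Dd : forall x y, D x -> D y ->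
   exists z, D z /\ ple x z /\ ple y z) : P.
refine (exist _ (fun i U => ereal_sup [set sval d i U | d in D]) _).
move=> i; apply: (sup_val D0 Dd).
- by move=> x y xy U; apply: xy.
- by move=> d _; apply: (svalP d).
Defined.

Lemma scott_open_gt (i : I) (U : opens (le i)) (r : \bar R) :
  scott_open ple (fun y : P => r < sval y i U).
Proof.
split.
  by move=> x y rx xy; apply: (lt_le_trans rx); apply: xy.
move=> D s Dd ls rs; apply: contrapT => /forallNP H.
have H' : forall d, D d -> sval d i U <= r.
  move=> d Dd'; rewrite leNgt; apply/negP => rd; apply: (H d); by split.
have ub : forall d, D d -> ple d (supP D Dd.1 Dd.2).
  by move=> d Dd' j V /=; apply: ereal_sup_ubound; exists d.
have := ls.2 _ ub i U => /= sle.
have : ereal_sup [set sval d i U | d in D] <= r.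
  by apply: ge_ereal_sup => _ [d Dd' <-]; apply: H'.
move=> /(le_trans sle) sr; move: rs; by rewrite ltNge sr.
Qed.


Definition topO i : opens (le i) := exist _ setT (scott_open_setT (le i)).
Definition botO i : opens (le i) := exist _ set0 (scott_open_set0 (le i)).

Lemma val_ge0 (x : P) i U : 0 <= sval x i U.
Proof. by have [+ _] := svalP x i; apply. Qed.

Lemma val_mono (x : P) i (U V : opens (le i)) : sval U `<=` sval V -> sval x i U <= sval x i V.
Proof. by have [_ [_ [+ _]]] := svalP x i; apply. Qed.

Lemma val_bot (x : P) i : sval x i (botO i) = 0.
Proof. by have [_ [+ _]] := svalP x i; apply. Qed.

Lemma conv_top (F : set P) (Hprob : forall nu, F nu -> prob_prodV nu) c :
  conv F c -> forall i, sval c i (topO i) = 1.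
Proof.
move=> [n [lam [f [Ff [l0 [ls cE]]]]]] i; rewrite cE.
under eq_bigr do rewrite (Hprob _ (Ff _) i (topO i) erefl) mule1.
by rewrite sumEFin ls.
Qed.

Lemma eqP_ext (x y : P) : (forall i U, sval x i U = sval y i U) -> x = y.
Proof.
case: x => fx px; case: y => fy py /= H.
have e : fx = fy by apply: functional_extensionality_dep => i; apply: funext => U; apply: H.
subst fy; congr exist; exact: Prop_irrelevance.
Qed.

Lemma bF_sub (F : set P) (Hzd : forall i, scott_zero_dimensional (le i))
  (Hprob : forall nu, F nu -> prob_prodV nu) x : bF F x -> conv F x.
Proof.
move=> [Hcl [a [Ha ax]]].
have xtop : forall i, sval x i (topO i) = 1.
  move=> i; apply/le_anti/andP; split; last by rewrite -(conv_top F Hprob a Ha i); apply: ax.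
  rewrite leNgt; apply/negP => lt1.
  have [c [Hc c1]] := Hcl _ (scott_open_gt i (topO i) 1) lt1.
  by move: c1; rewrite (conv_top F Hprob c Hc i) ltxx.
have clopen_eq : forall i (C : opens (le i)), scott_open (le i) (~` sval C) ->
    sval x i C = sval a i C.
  move=> i C Cc; pose C' : opens (le i) := exist _ _ Cc.
  have mod : forall y : P, sval y i (topO i) = 1 -> sval y i C + sval y i C' = 1.
    move=> y y1; have [_ [_ [_ [+ _]]]] := svalP y i.
    move=> /(_ C C' (topO i) (botO i)) -> //=; last by rewrite setICr.
      by rewrite y1 val_bot adde0.
    by rewrite setUCr.
  symmetry; apply: (ereal_sandwich (q := sval a i C') (q' := sval x i C')).
  - exact: val_ge0.
  - exact: val_ge0.
  - exact: ax.
  - exact: ax.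
  - exact: mod.
  - apply: mod; exact: conv_top F Hprob a Ha i.
suff -> : x = a by [].
apply: eqP_ext => i V.
pose DD := [set C : opens (le i) | scott_open (le i) (~` sval C) /\ sval C `<=` sval V].
have dirDD : directed (fun U V : opens (le i) => sval U `<=` sval V) DD.
  split.
    exists (botO i); split => //=; rewrite setC0; exact: scott_open_setT.
  move=> C1 C2 [c1 s1] [c2 s2].
  exists (exist _ _ (scott_openU (svalP C1) (svalP C2))); split.
    split => /=; last by move=> z [] ; [apply: s1|apply: s2].
    by rewrite setCU; apply: scott_openI.
  by split => z /= ?; [left|right].
have eV : sval V = \bigcup_(C in DD) sval C.
  apply/seteqP; split.
    move=> z Vz; have [C [Co [Cco [Cz CV]]]] := Hzd i _ z (svalP V) Vz.
    by exists (exist _ C Co) => //.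
  by move=> z [C [_ CV] Cz]; apply: CV.
have [_ [_ [_ [_ +]]]] := svalP x i; move=> /(_ DD V dirDD eV) ->.
have [_ [_ [_ [_ +]]]] := svalP a i; move=> /(_ DD V dirDD eV) ->.
congr ereal_sup; apply: eq_imagel => C [Cc _]; exact: clopen_eq.
Qed.

End Prod.

End PartP.
Import PartP.

Module PartE.
Set Implicit Arguments. Unset Strict Implicit. Unset Printing Implicit Defensive.
Import Order.TTheory GRing.Theory Num.Theory.
Import numFieldTopology.Exports numFieldNormedType.Exports.
Local Open Scope classical_set_scope.
Local Open Scope ring_scope.

Lemma max0_mono (R : realType) (a b : R) : a <= b -> Num.max a 0 <= Num.max b 0.
Proof. by move=> ab; rewrite ge_max !le_max ab lexx orbT. Qed.

Lemma max0_sub (R : realType) (a d : R) : 0 <= d -> Num.max a 0 - d <= Num.max (a - d) 0.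
Proof. move=> d0; rewrite /Num.max; case: (ltrP a 0); case: (ltrP (a - d) 0); lra. Qed.

Lemma max0_add (R : realType) (a b e : R) : `|a - b| < e -> Num.max b 0 <= Num.max a 0 + e.
Proof. rewrite ltr_norml /Num.max; case: (ltrP a 0); case: (ltrP b 0); lra. Qed.

Unset Implicit Arguments.
Section Phi.
Variables (R : realType) (I : Type) (X : I -> Type) (le : forall i, X i -> X i -> Prop).
Notation P := (prodV R le).
Notation ple := (@prod_le R I X le).
Variables (m : nat) (g : 'I_m -> P) (Hg : forall k, prob_prodV (g k)).

Definition phiW (w : 'I_m -> R) : P.
refine (exist _ (fun i U => \sum_(k < m) (Num.max (w k) 0)%:E * sval (g k) i U)%E _).
move=> i; apply: comb_val => [k|k]; first by rewrite le_max lexx orbT.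
exact: (svalP (g k) i).
Defined.

Definition bv k i U : R := fine (sval (g k) i U).

Lemma bvE k i U : (bv k i U)%:E = sval (g k) i U.
Proof.
rewrite /bv fineK // ge0_fin_numE ?val_ge0 //.
apply: (le_lt_trans (y := 1%E)); last by rewrite ltey.
rewrite -(Hg k i (@topO _ _ le i)) //; exact: val_mono.
Qed.

Lemma bv_ge0 k i U : 0 <= bv k i U.
Proof. by rewrite -lee_fin bvE val_ge0. Qed.

Lemma bv_le1 k i U : bv k i U <= 1.
Proof. rewrite -lee_fin bvE -(Hg k i (@topO _ _ le i)) //; exact: val_mono. Qed.

Lemma sum_bv i U : \sum_(k < m) bv k i U <= m%:R.
Proof.
apply: (@le_trans _ _ (\sum_(k < m) (1:R))); first by apply: ler_sum => k _; exact: bv_le1.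
by rewrite sumr_const card_ord.
Qed.

Lemma phiW_E w i U : sval (phiW w) i U = (\sum_(k < m) Num.max (w k) 0 * bv k i U)%:E.
Proof. by rewrite -sumEFin; apply: eq_bigr => k _; rewrite /= -bvE. Qed.

Lemma phiW_mono w w' : (forall k, w k <= w' k) -> ple (phiW w) (phiW w').
Proof.
move=> ww' i U; rewrite !phiW_E lee_fin; apply: ler_sum => k _.
by apply: ler_wpM2r; [exact: bv_ge0|exact: max0_mono].
Qed.


Notation vw v := (fun k => v ord0 k).

Lemma phi_cont_sub (S : set P) (v : 'rV[R]_m) :
  lawson_subbasic ple S -> S (phiW (vw v)) ->
  exists2 e : R, 0 < e & forall w : 'rV[R]_m, ball v e w -> S (phiW (vw w)).
Proof.
move=> [[Sup Sdir] Sv|[y ->] Sv].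
  pose D := [set phiW (fun k => v ord0 k - d) | d in [set d : R | 0 < d]].
  have dirD : directed ple D.
    split; first by exists (phiW (fun k => v ord0 k - 1)); rewrite /D; exists 1 => //; exact: ltr01.
    move=> _ _ [d1 d10 <-] [d2 d20 <-].
    exists (phiW (fun k => v ord0 k - Num.min d1 d2)); split.
      by rewrite /D; exists (Num.min d1 d2) => //=; rewrite lt_min d10 d20.
    split; apply: phiW_mono => k; rewrite lerD2l lerN2 ge_min lexx ?orbT //.
  have lubD : is_lub ple D (phiW (vw v)).
    split.
      by move=> _ [d d0 <-]; apply: phiW_mono => k; rewrite lerBlDr lerDl ltW.
    move=> u ub i U; rewrite phiW_E.
    have u0 := @val_ge0 _ _ _ _ u i U.
    case E: (sval u i U) u0 => [r| |] u0; last by [].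
      2: by rewrite leey.
    rewrite lee_fin; apply/ler_addgt0Pr => eps eps0.
    pose d := eps / (m%:R + 1).
    have d0 : 0 < d by rewrite divr_gt0 // ltr_wpDl.
    have := ub (phiW (fun k => v ord0 k - d)) (ex_intro2 _ _ d d0 erefl) i U.
    rewrite E phiW_E lee_fin => H.
    set A := \sum_(k < m) _.
    have h1 : \sum_(k < m) (Num.max (v ord0 k) 0 - d) * bv k i U <=
              \sum_(k < m) Num.max (v ord0 k - d) 0 * bv k i U.
      apply: ler_sum => k _; apply: ler_wpM2r; first exact: bv_ge0.
      exact: max0_sub (ltW d0).
    have h2 : \sum_(k < m) (Num.max (v ord0 k) 0 - d) * bv k i U =
              A - d * \sum_(k < m) bv k i U.
      by under eq_bigr do rewrite mulrBl; rewrite sumrB -mulr_sumr.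
    have h3 : d * \sum_(k < m) bv k i U <= d * m%:R.
      by apply: ler_wpM2l; [exact: ltW|exact: sum_bv].
    have h4 : d * m%:R <= eps.
      rewrite /d mulrAC ler_pdivrMr ?ltr_wpDl // mulrDr mulr1 lerDl; exact: ltW.
    lra.
  have [_ [[d d0 <-] Sd]] := Sdir D _ dirD lubD Sv.
  exists d => // w vw'; apply: Sup Sd _; apply: phiW_mono => k.
  have := ball_coord k vw'; rewrite ltr_norml; lra.
have [i [U yU]] : exists i U, ~ (sval y i U <= sval (phiW (vw v)) i U)%E.
  apply: contrapT => H; apply: Sv => i U; apply: contrapT => h; apply: H.
  by exists i, U.
move: yU; rewrite phiW_E; set A := \sum_(k < m) _.
move/negP; rewrite -ltNge.
case E: (sval y i U) => [r| |] Ar.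
- have rA : 0 < r - A by rewrite subr_gt0 -lte_fin.
  have m1 : 0 < m%:R + 1 :> R by rewrite ltr_wpDl.
  exists ((r - A) / (m%:R + 1)); first exact: divr_gt0.
  move=> w vw' Hle; have := Hle i U; rewrite E phiW_E lee_fin => H.
  set e := (r - A) / (m%:R + 1) in vw'.
  have h1 : \sum_(k < m) Num.max (w ord0 k) 0 * bv k i U <=
            \sum_(k < m) (Num.max (v ord0 k) 0 + e) * bv k i U.
    apply: ler_sum => k _; apply: ler_wpM2r; first exact: bv_ge0.
    exact: max0_add (ball_coord k vw').
  have h2 : \sum_(k < m) (Num.max (v ord0 k) 0 + e) * bv k i U =
            A + e * \sum_(k < m) bv k i U.
    by under eq_bigr do rewrite mulrDl; rewrite big_split -mulr_sumr.
  have e0 : 0 < e by exact: divr_gt0.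
  have h3 : e * \sum_(k < m) bv k i U <= e * m%:R.
    by apply: ler_wpM2l; [exact: ltW|exact: sum_bv].
  have h4 : e * m%:R < r - A.
    by rewrite /e mulrAC ltr_pdivrMr // mulrDr mulr1 ltrDl.
  clear Ar E Hle; lra.
- exists 1; first exact: ltr01.
  by move=> w vw' Hle; have := Hle i U; rewrite E phiW_E.
- by [].
Qed.



Lemma phi_cont_basic n0 (f : nat -> set P) (v : 'rV[R]_m) :
  (forall k, (k < n0)%N -> lawson_subbasic ple (f k)) ->
  (forall k, (k < n0)%N -> f k (phiW (vw v))) ->
  exists2 e : R, 0 < e & forall w : 'rV[R]_m, ball v e w ->
    forall k, (k < n0)%N -> f k (phiW (vw w)).
Proof.
elim: n0 => [|n0 IH] Hs Hv.
  by exists 1 => //; exact: ltr01.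
have [e1 e10 H1] := IH (fun k kn => Hs k (ltnW kn)) (fun k kn => Hv k (ltnW kn)).
have [e2 e20 H2] := phi_cont_sub (f n0) v (Hs n0 (ltnSn n0)) (Hv n0 (ltnSn n0)).
exists (Num.min e1 e2); first by rewrite lt_min e10 e20.
move=> w vw' k; rewrite ltnS leq_eqVlt => /orP [/eqP ->|kn].
  by apply: H2; apply: le_ball vw'; rewrite ge_min lexx orbT.
by apply: H1 => //; apply: le_ball vw'; rewrite ge_min lexx.
Qed.

Lemma phi_cont_open (U : set P) (v : 'rV[R]_m) :
  lawson_open ple U -> U (phiW (vw v)) ->
  exists2 e : R, 0 < e & forall w : 'rV[R]_m, ball v e w -> U (phiW (vw w)).
Proof.
move=> HU Uv; have [n0 [f [fs [fv fU]]]] := HU _ Uv.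
have [e e0 He] := phi_cont_basic n0 f v fs fv.
by exists e => // w vw'; apply: fU; apply: He.
Qed.

Variable F : set P.
Hypothesis HF : forall nu, F nu <-> exists k, g k = nu.

Lemma simplex_conv (v : 'rV[R]_m) : simplex v -> conv F (phiW (vw v)).
Proof.
move=> [v0 v1]; exists m, (vw v), g; split; first by move=> k; apply/HF; exists k.
split => //; split => // i U /=; apply: eq_bigr => k _; by rewrite max_l.
Qed.

Lemma conv_simplex c : conv F c -> exists2 v : 'rV[R]_m, simplex v & c = phiW (vw v).
Proof.
move=> [n [lam [f [Ff [l0 [ls cE]]]]]].
have [j Hj] : {j : 'I_n -> 'I_m & forall k, g (j k) = f k}.
  by apply: (@choice _ _ (fun k j => g j = f k)) => k; apply/HF; exact: Ff.
pose v : 'rV[R]_m := \row_(l < m) \sum_(k < n | j k == l) lam k.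
have v0 : forall l, 0 <= v ord0 l by move=> l; rewrite mxE; apply: sumr_ge0.
exists v.
  split => //; rewrite -ls (partition_big j xpredT) //=.
  by apply: eq_bigr => l _; rewrite mxE.
apply: eqP_ext => i U; rewrite cE /=.
rewrite (partition_big j xpredT) //=; apply: eq_bigr => l _.
rewrite max_l ?v0 // mxE -sumEFin ge0_sume_distrl; last by move=> k _; rewrite lee_fin.
by apply: eq_bigr => k /eqP <-; rewrite Hj.
Qed.

End Phi.

End PartE.
Import PartE.

Module PartG.
Set Implicit Arguments. Unset Strict Implicit. Unset Printing Implicit Defensive.
Import Order.TTheory GRing.Theory Num.Theory.
Import numFieldTopology.Exports numFieldNormedType.Exports.
Local Open Scope classical_set_scope.
Local Open Scope ring_scope.

Unset Implicit Arguments.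
Section Fin.
Variables (R : realType) (I : Type) (X : I -> Type) (le : forall i, X i -> X i -> Prop).
Notation P := (prodV R le).
Notation ple := (@prod_le R I X le).
Variables (m : nat) (g : 'I_m -> P) (Hg : forall k, prob_prodV (g k)).
Variable F : set P.
Hypothesis HF : forall nu, F nu <-> exists k, g k = nu.

Lemma lawson_compact_conv : lawson_compact ple (conv F).
Proof.
move=> G HG cov.
have cc := @simplex_compact R m; rewrite compact_cover in cc.
pose O (U : set P) : set 'rV[R]_m :=
  \bigcup_(p in [set p : 'rV[R]_m * R | 0 < p.2 /\
     forall w, ball p.1 p.2 w -> U (phiW R I X le m g (fun k => w ord0 k))]) ball p.1 p.2.
have cov0 : @simplex R m `<=` cover G O.
  move=> v sv.
  have [U GU Uv] := cov _ (simplex_conv R I X le m g F HF v sv).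
  have [e e0 He] := phi_cont_open R I X le m g Hg U v (HG U GU) Uv.
  by exists U => //; exists (v, e) => //=; apply: ballxx.
have [D' sD cov'] := cc (set P) G O (fun U _ => bigcup_open (fun p _ => ball_open p.1 p.2)) cov0.
pose s := enum_fset D'.
exists (size s), (fun k => nth set0 s k); split.
  by move=> k ks; apply: set_mem; apply: sD; apply: mem_nth.
move=> c /(conv_simplex R I X le m g F HF) [v sv ->].
have [U DU [p [p0 pU] vp]] := cov' v sv.
exists (index U s); split; first by rewrite index_mem.
by rewrite nth_index //; apply: pU.
Qed.

End Fin.

End PartG.
Import PartG.

Local Open Scope classical_set_scope.

Theorem mainTheorem13 (R : realType) (I : Type) (X : I -> Type)
    (le : forall i, X i -> X i -> Prop)
    (Hdom : forall i, cont_domain (le i))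
    (Hcoh : forall i, scott_coherent (le i))
    (Hzd : forall i, scott_zero_dimensional (le i))
    (F : set (prodV R le)) (Hfin : finite_set F)
    (Hprob : forall nu, F nu -> prob_prodV nu) :
  bF F = conv F /\ lawson_compact (@prod_le R I X le) (conv F).
Proof.
split.
  apply/seteqP; split => x.
    exact: (bF_sub R I X le F Hzd Hprob x).
  move=> cx; split.
    by move=> U _ Ux; exists x.
  by exists x; split => // i U; exact: Order.POrderTheory.lexx.
have [n /card_eqPle [Fle _]] := Hfin.
case/pfcard_geP: Fle => [F0|/surjfunPex [f Ff]].
  move=> G _ _; exists 0%N, (fun _ => set0); split => //.
  move=> c [n' [lam [f' [Ff' [_ [ls _]]]]]].
  case: n' lam f' Ff' ls => [|n''] lam f' Ff' ls.
    by move: ls; rewrite big_ord0 => /eqP; rewrite eq_sym GRing.oner_eq0.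
  by have := Ff' ord0; rewrite F0.
pose g : 'I_n -> prodV R le := fun k => f (nat_of_ord k).
have HF : forall nu, F nu <-> exists k, g k = nu.
  move=> nu; rewrite Ff; split.
    by move=> [k kn <-]; exists (Ordinal kn).
  by move=> [k <-]; exists (nat_of_ord k) => //=; exact: ltn_ord.
have Hg : forall k, prob_prodV (g k) by move=> k; apply: Hprob; apply/HF; exists k.
exact: (lawson_compact_conv R I X le n g Hg F HF).
Qed.
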